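(* Let $R$ be a discrete valuation ring with field of fractions $K$ and uniformizer $\pi$, $V$ a finite-dimensional $K$-vector space, and $L,M$ lattices of $V$. Then $L\cap M\subset m_-(L,M)\subset m_+(L,M)\subset L+M$.
   Context: A lattice of $V$ is a free $R$-submodule $L$ with $K\otimes_R L\to V$ an isomorphism. $m_-(L,M)=\sum_{n\in\mathbb Z}(\pi^nL\cap\pi^{-n}M)$ (the $R$-submodule generated by these) and $m_+(L,M)=\bigcap_{n\in\mathbb Z}(\pi^nL+\pi^{-n}M)$. *)

(* Defs.v *)
From HB Require Import structures.
From mathcomp Require Import all_boot all_order all_algebra.
Set Implicit Arguments. Unset Strict Implicit. Unset Printing Implicit Defensive.
Import GRing.Theory Num.Theory.
Local Open Scope ring_scope.

Definition is_dvr (K : fieldType) (R : {pred K}) (pi : K) : Prop :=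
  [/\ 1 \in R,
      (forall x y, x \in R -> y \in R -> x - y \in R),
      (forall x y, x \in R -> y \in R -> x * y \in R),
      pi \in R /\ pi != 0 /\ pi^-1 \notin R &
      (forall x : K, x != 0 -> exists (n : int) (u : K),
          [/\ u \in R, u^-1 \in R & x = u * pi ^ n])].

Definition vset (V : Type) := V -> Prop.

(* L is a lattice: a free R-submodule of V with an R-basis b such that
   K (x)_R L -> V is an isomorphism, i.e. b is a K-basis of V and L is the
   set of R-linear combinations of b. *)
Definition is_lattice (K : fieldType) (R : {pred K}) (V : vectType K)
  (L : vset V) : Prop :=
  exists b : seq V, basis_of fullv b /\
    forall x, L x <-> exists c : 'I_(size b) -> K,
      (forall i, c i \in R) /\ x = \sum_(i < size b) c i *: b`_i.

Definition scale_set (K : fieldType) (V : vectType K) (a : K) (L : vset V)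
  : vset V := fun x => exists y, L y /\ x = a *: y.

Definition sum_set (K : fieldType) (V : vectType K) (L M : vset V) : vset V :=
  fun x => exists a b, [/\ L a, M b & x = a + b].

Definition Rspan (K : fieldType) (R : {pred K}) (V : vectType K) (S : vset V)
  : vset V := fun x => exists (n : nat) (v : 'I_n -> V) (c : 'I_n -> K),
    [/\ forall i, S (v i), forall i, c i \in R & x = \sum_(i < n) c i *: v i].

Definition m_minus (K : fieldType) (R : {pred K}) (pi : K) (V : vectType K)
  (L M : vset V) : vset V :=
  Rspan R (fun x => exists n : int,
             scale_set (pi ^ n) L x /\ scale_set (pi ^ (- n)) M x).

Definition m_plus (K : fieldType) (pi : K) (V : vectType K)
  (L M : vset V) : vset V :=
  fun x => forall n : int,
    sum_set (scale_set (pi ^ n) L) (scale_set (pi ^ (- n)) M) x.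

(* Main.v *)
Require Import Defs.
From HB Require Import structures.
From mathcomp Require Import all_boot all_order all_algebra.
Local Open Scope ring_scope.
Import GRing.Theory Num.Theory.

Definition submod {K : fieldType} (R : {pred K}) {V : vectType K} (L : vset V) :=
  [/\ L 0, (forall x y, L x -> L y -> L (x + y)) &
      (forall r x, r \in R -> L x -> L (r *: x))].

Section Aux.
Variables (K : fieldType) (R : {pred K}) (pi : K) (V : vectType K).
Hypothesis hR : is_dvr R pi.

Lemma R0 : 0 \in R.
Proof. have [h1 hB _ _ _] := hR. by rewrite -(subrr 1); apply: (hB). Qed.

Lemma RD x y : x \in R -> y \in R -> x + y \in R.
Proof.
have [h1 hB _ _ _] := hR; move=> hx hy.
rewrite -[y]opprK; apply: (hB) => //.
by rewrite -sub0r; apply: (hB) => //; apply: R0.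
Qed.

Lemma RM x y : x \in R -> y \in R -> x * y \in R.
Proof. have [_ _ hM _ _] := hR; apply: (hM). Qed.

Lemma Rexp (m : nat) : pi ^+ m \in R.
Proof.
have [h1 _ _ [hp _] _] := hR.
elim: m => [|m IH]; first by rewrite expr0.
by rewrite exprS; apply: RM.
Qed.

Lemma lattice_submod (L : vset V) : is_lattice R L -> submod R L.
Proof.
case=> b [_ hL]; split.
- apply/hL; exists (fun _ => 0); split => [i|]; first exact: R0.
  by rewrite big1 // => i _; rewrite scale0r.
- move=> x y /hL [c [hc ->]] /hL [d [hd ->]]; apply/hL.
  exists (fun i => c i + d i); split => [i|]; first by apply: RD.
  by rewrite -big_split /=; apply: eq_bigr => i _; rewrite scalerDl.
- move=> r x hr /hL [c [hc ->]]; apply/hL.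
  exists (fun i => r * c i); split => [i|]; first by apply: RM.
  by rewrite scaler_sumr; apply: eq_bigr => i _; rewrite scalerA.
Qed.

Lemma scale_submod (L : vset V) a : submod R L -> submod R (scale_set a L).
Proof.
case=> h0 hD hZ; split.
- by exists 0; rewrite scaler0.
- move=> x y [x' [hx ->]] [y' [hy ->]]; exists (x' + y'); split; first exact: (hD).
  by rewrite scalerDr.
- move=> r x hr [x' [hx ->]]; exists (r *: x'); split; first exact: (hZ).
  by rewrite !scalerA mulrC.
Qed.

Lemma sum_submod (L M : vset V) : submod R L -> submod R M -> submod R (sum_set L M).
Proof.
case=> h0 hD hZ [k0 kD kZ]; split.
- by exists 0, 0; rewrite addr0.
- move=> x y [a [b [ha hb ->]]] [a' [b' [ha' hb' ->]]].
  exists (a + a'), (b + b'); split; [exact: (hD) | exact: kD |].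
  by rewrite addrACA.
- move=> r x hr [a [b [ha hb ->]]]; exists (r *: a), (r *: b); split;
    [exact: (hZ) | exact: kZ |]; by rewrite scalerDr.
Qed.

Lemma span_sub (S T : vset V) x : submod R T -> (forall y, S y -> T y) ->
  Rspan R S x -> T x.
Proof.
case=> h0 hD hZ hST [n [v [c [hv hc ->]]]].
elim: n v c hv hc => [|n IH] v c hv hc; first by rewrite big_ord0.
rewrite big_ord_recr /=; apply: (hD); last by apply: (hZ) => //; apply: (hST).
exact: (IH (fun i => v (widen_ord (leqnSn n) i)) (fun i => c (widen_ord (leqnSn n) i))).
Qed.

Lemma scale_mono (L : vset V) (n k : int) y : submod R L -> n <= k ->
  scale_set (pi ^ k) L y -> scale_set (pi ^ n) L y.
Proof.
have [_ _ _ [_ [pi0 _]] _] := hR.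
case=> _ _ hZ hnk [y' [hy ->]].
exists (pi ^ (k - n) *: y'); split.
  apply: (hZ) => //; rewrite -(gez0_abs (m := k - n)) ?subr_ge0 //; exact: Rexp.
by rewrite scalerA -expfzDr // addrC subrK.
Qed.
End Aux.
Arguments span_sub {K R V S T x}.
Arguments scale_mono {K R pi V} hR {L n k y}.

Theorem proposition1p2p1 (K : fieldType) (R : {pred K}) (pi : K)
  (V : vectType K) (L M : vset V) :
  is_dvr R pi -> is_lattice R L -> is_lattice R M ->
  [/\ (forall x, L x /\ M x -> m_minus R pi L M x),
      (forall x, m_minus R pi L M x -> m_plus pi L M x) &
      (forall x, m_plus pi L M x -> sum_set L M x)].
Proof.
move=> hR /lattice_submod hL /lattice_submod hM.
have hL' := hL pi hR; have hM' := hM pi hR.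
have h1 : 1 \in R by have [] := hR.
split.
- move=> x [lx mx]; exists 1%N, (fun _ => x), (fun _ => 1); split => //.
    move=> _; exists 0; rewrite oppr0 expr0z; split; exists x; by rewrite scale1r.
  by rewrite big_ord1 scale1r.
- move=> x hx n.
  apply: (span_sub _ _ hx).
    by apply: sum_submod; apply: scale_submod.
  move=> y [k [yL yM]].
  case: (lerP n k) => hnk.
  + exists y, 0; split; last by rewrite addr0.
      exact: (scale_mono hR hL' hnk).
    by case: (@scale_submod _ _ _ _ (pi ^ (- n)) hM').
  + exists 0, y; split; first by case: (@scale_submod _ _ _ _ (pi ^ n) hL').
      apply: (scale_mono hR hM' _ yM); rewrite lerN2; exact: Order.POrderTheory.ltW.
    by rewrite add0r.
- move=> x /(_ 0) [a [b [[a' [ha ->]] [b' [hb ->]] ->]]].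
  by exists a', b'; rewrite oppr0 expr0z !scale1r.
Qed.
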